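(* Let $A_0(z)$ be the unique function holomorphic near $z=0$ with $A_0(0)=0$ and $z(1+A_0(z))^3=A_0(z)$, define $A_k(z)$, $k\ge1$, by the recurrence below, and define $A_k[n]$ by $A_k(z)=(-1)^k\sum_{n\ge1}A_k[n]z^n$. Then for every $k=0,1,2,\dots$, the sequence $n\mapsto A_k[n]$ is monotonically increasing.
   Context: With $\delta_z=z\frac{d}{dz}$, for $k\ge0$: $$A_{k+1}=\frac{1+A_0}{2A_0-1}\Bigl(\delta_z^2A_k+\sum_{i+j=k}\bigl(A_i\delta_z^2A_j-\delta_zA_i\,\delta_zA_j\bigr)-3z\!\!\sum_{\substack{i+j=k+1\\ i,j\le k}}\!\!A_iA_j-z\!\!\!\sum_{\substack{j_1+j_2+j_3=k+1\\ j_1,j_2,j_3\le k}}\!\!\!A_{j_1}A_{j_2}A_{j_3}\Bigr),$$ all indices nonnegative. Equivalently, $(A_k)$ is the unique sequence of functions holomorphic in $|z|<4/27$ such that $\sum_kA_k(z)a^{-2k}$ formally solves $a^2(z(1+A)^3-A)=(1+A)\delta_z^2A-(\delta_zA)^2$. *)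

(* Defs.v *)
(* Formal power series over rat, represented by their
   coefficient sequences  a : nat -> rat  (a n = coefficient of z^n). *)
From mathcomp Require Import all_boot all_order all_algebra.
Set Implicit Arguments. Unset Strict Implicit. Unset Printing Implicit Defensive.
Import Order.TTheory GRing.Theory Num.Theory.
Local Open Scope ring_scope.

Definition series := nat -> rat.

Definition sconst (c : rat) : series := fun n => if n is 0 then c else 0.
Definition sadd (a b : series) : series := fun n => a n + b n.
Definition sscale (c : rat) (a : series) : series := fun n => c * a n.
Definition smul (a b : series) : series :=
  fun n => \sum_(i < n.+1) a i * b (n - i)%N.
Definition szmul (a : series) : series := fun n => if n is m.+1 then a m else 0.
(* the Euler operator delta_z = z d/dz *)
Definition sdelta (a : series) : series := fun n => n%:R * a n.

(* multiplicative inverse of a series with nonzero constant term: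
   b 0 = 1/a 0,  b n = -(1/a 0) * sum_{i=1}^n a i * b (n-i). *)
Fixpoint sinv_aux (a : series) (n : nat) : seq rat :=
  match n with
  | 0 => [:: (a 0%N)^-1]
  | m.+1 => let s := sinv_aux a m in
            rcons s (- (a 0%N)^-1 *
                     \sum_(i < m.+1) a i.+1 * nth 0 s (m - i)%N)
  end.
Definition sinv (a : series) : series := fun n => nth 0 (sinv_aux a n) n.

(* The bracket in the recurrence, for a family A : nat -> series and index k:
   delta^2 A_k + sum_{i+j=k} (A_i delta^2 A_j - delta A_i delta A_j)
   - 3 z sum_{i+j=k+1, i,j<=k} A_i A_j
   - z sum_{j1+j2+j3=k+1, j1,j2,j3<=k} A_j1 A_j2 A_j3 *)
Definition rec_bracket (A : nat -> series) (k : nat) : series := fun n =>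
  sdelta (sdelta (A k)) n
  + \sum_(i < k.+1) \sum_(j < k.+1 | (i + j == k)%N)
       (smul (A i) (sdelta (sdelta (A j))) n
        - smul (sdelta (A i)) (sdelta (A j)) n)
  - 3%:R * szmul (fun m => \sum_(i < k.+1) \sum_(j < k.+1 | (i + j == k.+1)%N)
                            smul (A i) (A j) m) n
  - szmul (fun m => \sum_(j1 < k.+1) \sum_(j2 < k.+1) \sum_(j3 < k.+1
                            | (j1 + j2 + j3 == k.+1)%N)
                            smul (smul (A j1) (A j2)) (A j3) m) n.

Definition rec_prefactor (A0 : series) : series :=
  smul (sadd (sconst 1) A0) (sinv (sadd (sscale 2%:R A0) (sconst (-1)))).

Definition Acoef (A : nat -> series) (k n : nat) : rat := (-1) ^+ k * A k n.

(* Main.v *)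
Require Import Defs.
From mathcomp Require Import all_boot all_order all_algebra.
From mathcomp Require Import ring lra zify.
Import Order.TTheory GRing.Theory Num.Theory.
Local Open Scope ring_scope.

Definition Mon (f : series) (n : nat) :=
  forall j, (j < n)%N -> 0 <= f j /\ f j <= f j.+1.

Lemma smul_S f g j :
  smul f g j.+1 = f 0%N * g j.+1 + \sum_(i < j.+1) f i.+1 * g (j - i)%N.
Proof. by rewrite /smul big_ord_recl /=. Qed.

Lemma Mon_smul f g n : Mon f n -> (forall j, (j <= n)%N -> 0 <= g j) ->
  Mon (smul f g) n.
Proof.
move=> Hf Hg j ltjn; split.
  rewrite /smul; apply: sumr_ge0 => i _; apply: mulr_ge0.
    have := ltn_ord i; move=> Hi; apply: (Hf i _).1; lia.
  apply: Hg; lia.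
rewrite smul_S /smul; apply: ler_wpDl.
  apply: mulr_ge0; [apply: (Hf 0%N _).1; lia | apply: Hg; lia].
apply: ler_sum => i _; apply: ler_wpM2r.
  apply: Hg; lia.
have := ltn_ord i => Hi; apply: (Hf i _).2; lia.
Qed.

Lemma smul_ge0 f g n : (forall j, 0 <= f j) -> (forall j, 0 <= g j) ->
  0 <= smul f g n.
Proof. by move=> Hf Hg; apply: sumr_ge0 => i _; apply: mulr_ge0. Qed.

Lemma smul_ext f f' g g' n : (forall j, f j = f' j) -> (forall j, g j = g' j) ->
  smul f g n = smul f' g' n.
Proof. by move=> Hf Hg; apply: eq_bigr => i _; rewrite Hf Hg. Qed.

Lemma smulZl c f g n : smul (fun j => c * f j) g n = c * smul f g n.
Proof. by rewrite /smul mulr_sumr; apply: eq_bigr => i _; rewrite mulrA. Qed.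

Lemma smulZr c f g n : smul f (fun j => c * g j) n = c * smul f g n.
Proof.
by rewrite /smul mulr_sumr; apply: eq_bigr => i _; rewrite /= mulrCA.
Qed.

Lemma size_sinv_aux a m : size (sinv_aux a m) = m.+1.
Proof. by elim: m => [|m IH] //=; rewrite size_rcons IH. Qed.

Lemma sinv_aux_prefix a m j : (j <= m)%N -> nth 0 (sinv_aux a m) j = sinv a j.
Proof.
elim: m => [|m IH] Hj.
  by have -> : j = 0%N by lia.
case: (ltnP j m.+1) => H.
  by rewrite /= nth_rcons size_sinv_aux H IH.
by have -> : j = m.+1 by lia.
Qed.

Lemma sinv_S a n : sinv a n.+1 =
  - (a 0%N)^-1 * \sum_(i < n.+1) a i.+1 * sinv a (n - i)%N.
Proof.
rewrite /sinv /= nth_rcons size_sinv_aux ltnn eqxx; congr (_ * _).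
apply: eq_bigr => i _; rewrite sinv_aux_prefix //; lia.
Qed.

Lemma smulNr f g n : smul f (fun j => - g j) n = - smul f g n.
Proof. by rewrite /smul -sumrN; apply: eq_bigr => i _; rewrite mulrN. Qed.

Lemma A0_mon (A : nat -> series) : A 0%N 0%N = 0 ->
  (forall n : nat,
     szmul (smul (smul (sadd (sconst 1) (A 0%N)) (sadd (sconst 1) (A 0%N)))
                 (sadd (sconst 1) (A 0%N))) n = A 0%N n) ->
  forall n, Mon (sadd (sconst 1) (A 0%N)) n.
Proof.
move=> H00 H0.
have aS : forall m, sadd (sconst 1) (A 0%N) m.+1 =
   smul (smul (sadd (sconst 1) (A 0%N)) (sadd (sconst 1) (A 0%N)))
                 (sadd (sconst 1) (A 0%N)) m.
  by move=> m; rewrite {1}/sadd /= add0r -[A 0%N m.+1]H0.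
set a := sadd (sconst 1) (A 0%N) in aS *.
have a0 : a 0%N = 1 by rewrite /a /sadd /= H00 addr0.
elim=> [|n IH]; first by move=> j.
have NN : forall j, (j <= n)%N -> 0 <= a j.
  case=> [|j] Hj; first by rewrite a0.
  have [H1 H2] := IH j Hj; exact: le_trans H1 H2.
have Mc : Mon (smul (smul a a) a) n.
  apply: Mon_smul => //; exact: Mon_smul.
move=> j; rewrite ltnS leq_eqVlt => /orP [/eqP -> | /IH //].
case: n IH NN Mc => [|m] IH NN Mc.
  by rewrite aS a0 /smul !big_ord1 /= a0 !mulr1 lexx ler01.
rewrite !aS; have [H1 H2] := Mc m (ltnSn m); split=> //.
Qed.

Lemma sinv_np (A : nat -> series) : A 0%N 0%N = 0 -> (forall p, 0 <= A 0%N p) ->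
  forall n, sinv (sadd (sscale 2%:R (A 0%N)) (sconst (-1))) n <= 0.
Proof.
move=> H00 Hnn.
set s := sinv _.
suff H : forall n m, (m <= n)%N -> s m <= 0.
  by move=> k; apply: (H k).
elim=> [|n IH] m Hm.
  have -> : m = 0%N by lia.
  by rewrite /s /sinv /= /sadd /sscale /= H00 mulr0 add0r invrN1 lerN10.
rewrite leq_eqVlt in Hm; case/orP: Hm => [/eqP -> | Hm]; last exact: IH.
rewrite /s sinv_S /sadd /sscale /= H00 mulr0 add0r invrN1 opprK mul1r.
rewrite -oppr_ge0 -sumrN; apply: sumr_ge0 => i _.
rewrite -mulrN addr0; apply: mulr_ge0.
  by apply: mulr_ge0; [exact: ler0n | exact: Hnn].
rewrite oppr_ge0; apply: IH; lia.
Qed.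

Lemma pair_ge0 (A : nat -> series) i j m :
  (forall p, 0 <= Acoef A i p) -> (forall p, 0 <= Acoef A j p) ->
  0 <= (-1) ^+ (i + j) * smul (A i) (A j) m.
Proof.
move=> Hi Hj; rewrite /smul mulr_sumr; apply: sumr_ge0 => p _.
have -> : (-1) ^+ (i + j) * (A i p * A j (m - p)%N) =
          Acoef A i p * Acoef A j (m - p)%N by rewrite /Acoef exprD; ring.
exact: mulr_ge0.
Qed.

Lemma triple_ge0 (A : nat -> series) i j l m :
  (forall p, 0 <= Acoef A i p) -> (forall p, 0 <= Acoef A j p) ->
  (forall p, 0 <= Acoef A l p) ->
  0 <= (-1) ^+ (i + j + l) * smul (smul (A i) (A j)) (A l) m.
Proof.
move=> Hi Hj Hl.
have -> : smul (smul (A i) (A j)) (A l) m =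
  \sum_(p < m.+1) smul (A i) (A j) p * A l (m - p)%N by [].
rewrite mulr_sumr; apply: sumr_ge0 => p _.
have -> : (-1) ^+ (i + j + l) * (smul (A i) (A j) p * A l (m - p)%N) =
  ((-1) ^+ (i + j) * smul (A i) (A j) p) * Acoef A l (m - p)%N
  by rewrite /Acoef exprD; ring.
apply: mulr_ge0 => //; exact: pair_ge0.
Qed.

Lemma Yterm (A : nat -> series) k i n : (i <= k)%N ->
  (-1) ^+ k * (smul (A i) (sdelta (sdelta (A (k - i)%N))) n
               - smul (sdelta (A i)) (sdelta (A (k - i)%N)) n) =
  \sum_(p < n.+1) Acoef A i p * Acoef A (k - i)%N (n - p)%N *
     (((n - p)%N)%:R ^+ 2 - p%:R * ((n - p)%N)%:R).
Proof.
move=> Hik.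
have -> : (-1) ^+ k = (-1) ^+ i * (-1) ^+ (k - i) :> rat by rewrite -exprD subnKC.
rewrite /smul /sdelta -sumrB mulr_sumr; apply: eq_bigr => p _; rewrite /Acoef; ring.
Qed.

Lemma Ysum_ge0 (A : nat -> series) k n :
  (forall i, (i <= k)%N -> forall p, 0 <= Acoef A i p) ->
  0 <= \sum_(i < k.+1) \sum_(p < n.+1) Acoef A i p * Acoef A (k - i)%N (n - p)%N *
     (((n - p)%N)%:R ^+ 2 - p%:R * ((n - p)%N)%:R).
Proof.
move=> Hnn.
set T := \sum_(i < k.+1) _.
have E : T = \sum_(i < k.+1) \sum_(p < n.+1) Acoef A i p * Acoef A (k - i)%N (n - p)%N *
     (p%:R ^+ 2 - p%:R * ((n - p)%N)%:R).
  rewrite /T (reindex_inj rev_ord_inj) /=; apply: eq_bigr => i _.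
  rewrite (reindex_inj rev_ord_inj) /=; apply: eq_bigr => p _.
  have Hi := ltn_ord i; have Hp := ltn_ord p.
  rewrite !subSS !subKn; [|lia|lia].
  ring.
suff : 0 <= T + T by lra.
rewrite {2}E -big_split; apply: sumr_ge0 => i _; rewrite -big_split.
apply: sumr_ge0 => p _; rewrite /= -mulrDr; apply: mulr_ge0.
  apply: mulr_ge0; apply: Hnn => //; [ have := ltn_ord i; lia | lia].
have -> : ((n - p)%N%:R ^+ 2 - p%:R * (n - p)%N%:R + (p%:R ^+ 2 - p%:R * (n - p)%N%:R))
   = (p%:R - (n - p)%N%:R) ^+ 2 :> rat by ring.
exact: sqr_ge0.
Qed.

Lemma comb_ge0 (s X Y Z W : rat) : 0 <= s * X -> 0 <= s * Y ->
  0 <= - (s * Z) -> 0 <= - (s * W) -> 0 <= s * (X + Y - 3%:R * Z - W).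
Proof.
move=> h1 h2 h3 h4.
have -> : s * (X + Y - 3%:R * Z - W) = s * X + s * Y + 3%:R * (- (s * Z)) + - (s * W)
  by ring.
by rewrite !addr_ge0 // mulr_ge0.
Qed.

Lemma szmul_ge0 (s : rat) f n : (forall m, 0 <= - (s * f m)) -> 0 <= - (s * szmul f n).
Proof. by case: n => [|m] H //=; rewrite mulr0 oppr0. Qed.

Lemma bracket_ge0 (A : nat -> series) k n :
  (forall i, (i <= k)%N -> forall p, 0 <= Acoef A i p) ->
  0 <= (-1) ^+ k * rec_bracket A k n.
Proof.
move=> Hnn; rewrite /rec_bracket; apply: comb_ge0.
- have -> : (-1) ^+ k * sdelta (sdelta (A k)) n = n%:R * n%:R * Acoef A k n
    by rewrite /sdelta /Acoef; ring.
  by apply: mulr_ge0; [apply: mulr_ge0; apply: ler0n | exact: Hnn].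
- rewrite mulr_sumr.
  apply: (le_trans (Ysum_ge0 A k n Hnn)); rewrite le_eqVlt; apply/orP; left; apply/eqP.
  apply: eq_bigr => i _.
  have Hi := ltn_ord i.
  rewrite (big_pred1 (Ordinal (leq_ltn_trans (leq_subr i k) (ltnSn k)))).
    by rewrite /= Yterm //; lia.
  move=> j /=; apply/eqP/eqP => H.
    by apply: val_inj => /=; lia.
  by rewrite H /=; lia.
- apply: szmul_ge0 => m; rewrite -mulNr mulr_sumr; apply: sumr_ge0 => i _.
  rewrite mulr_sumr; apply: sumr_ge0 => j /eqP Hij.
  have -> : - (-1) ^+ k = (-1) ^+ (i + j) :> rat by rewrite Hij exprS mulN1r.
  apply: pair_ge0; apply: Hnn; have := ltn_ord i; have := ltn_ord j; lia.
- apply: szmul_ge0 => m; rewrite -mulNr mulr_sumr; apply: sumr_ge0 => i _.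
  rewrite mulr_sumr; apply: sumr_ge0 => j _.
  rewrite mulr_sumr; apply: sumr_ge0 => l /eqP Hij.
  have -> : - (-1) ^+ k = (-1) ^+ (i + j + l) :> rat by rewrite Hij exprS mulN1r.
  apply: triple_ge0; apply: Hnn; have := ltn_ord i; have := ltn_ord j;
    have := ltn_ord l; lia.
Qed.

Theorem proposition4 (A : nat -> series) :
  (* A_0(0) = 0 and z (1 + A_0)^3 = A_0 *)
  A 0%N 0%N = 0 ->
  (forall n : nat,
     szmul (smul (smul (sadd (sconst 1) (A 0%N)) (sadd (sconst 1) (A 0%N)))
                 (sadd (sconst 1) (A 0%N))) n = A 0%N n) ->
  (* the recurrence for A_{k+1}, k >= 0 *)
  (forall (k n : nat),
     A k.+1 n = smul (rec_prefactor (A 0%N)) (rec_bracket A k) n) ->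
  forall (k n : nat), (1 <= n)%N -> Acoef A k n <= Acoef A k n.+1.
Proof.
move=> H00 H0 Hrec.
have Ma := A0_mon A H00 H0.
have aE : forall p, (1 <= p)%N -> sadd (sconst 1) (A 0%N) p = A 0%N p.
  by case=> [|p] // _; rewrite /sadd /= add0r.
have A0nn : forall p, 0 <= A 0%N p.
  case=> [|p]; first by rewrite H00.
  rewrite -aE //; exact: (Ma p.+2 p.+1 (ltnSn _)).1.
have snp := sinv_np A H00 A0nn.
set s := sinv _ in snp.
set a := sadd (sconst 1) (A 0%N) in Ma aE.
set P := smul a (fun p => - s p).
have MP : forall n, Mon P n.
  move=> n; apply: Mon_smul => // j _; rewrite oppr_ge0; exact: snp.
have Ak1 : forall k n, Acoef A k.+1 n =
    smul P (fun p => (-1) ^+ k * rec_bracket A k p) n.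
  move=> k n; rewrite /Acoef Hrec /rec_prefactor -/a -/s smulZr.
  rewrite (@smul_ext (smul a s) (fun p => -1 * P p) (rec_bracket A k) (rec_bracket A k)).
  - by rewrite smulZl exprS; ring.
  - by move=> j; rewrite /P smulNr mulN1r opprK.
  - by [].
have Pnn : forall p, 0 <= P p by move=> p; exact: (MP p.+1 p (ltnSn _)).1.
have NN : forall k i, (i <= k)%N -> forall p, 0 <= Acoef A i p.
  elim=> [|k IH] i Hi p.
    have -> : i = 0%N by lia.
    by rewrite /Acoef expr0 mul1r.
  rewrite leq_eqVlt in Hi; case/orP: Hi => [/eqP -> | Hi]; last exact: IH.
  rewrite Ak1; apply: smul_ge0 => // j; exact: bracket_ge0.
case=> [|k] n Hn.
  rewrite /Acoef !expr0 !mul1r -!aE //; exact: (Ma n.+1 n (ltnSn _)).2.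
rewrite !Ak1.
have := @Mon_smul P (fun p => (-1) ^+ k * rec_bracket A k p) n.+1 (MP n.+1).
move=> H; apply: (H _ n (ltnSn _)).2 => j _; apply: bracket_ge0; exact: NN.
Qed.
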